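(* Let $T^X$ and $T^Y$ be stable trees marked by finite sets $X$ and $Y$, and suppose $T^X$ is compatible with $T^Y$. If an internal vertex $v$ of $T^Y$ separates three vertices of $T^X$, then $v$ is a vertex of $T^X$.
   Context: A tree is a finite connected graph without cycles (vertex set $V$, edges $2$-element subsets of $V$); leaves are vertices of valence $1$, the others internal vertices ($IV$); the tree is stable if every internal vertex has valence at least $3$. A tree marked by a finite set $X$ is a tree whose set of leaves is $X$. In a tree $T$, a vertex $v$ separates vertices $v_1,v_2,v_3$ if $v_1,v_2,v_3$ lie in three distinct connected components of $T\setminus\{v\}$. A tree $T^X$ is compatible with a tree $T^Y$ if (1) $X\subseteq Y$ and $IV^X\subseteq IV^Y$ (so every vertex of $T^X$ is a vertex of $T^Y$), and (2) for all vertices $v,v_1,v_2,v_3$ of $T^X$, $v$ separates $v_1,v_2,v_3$ in $T^X$ if and only if $v$ separates $v_1,v_2,v_3$ in $T^Y$. *)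

(* Defs.v *)
(* A (finite) graph is given by a vertex set A : {set V}
   inside an ambient finite type V, and a boolean edge relation e : rel V
   (edges = 2-element subsets {x,y} with e x y). *)
From mathcomp Require Import all_boot.
Set Implicit Arguments. Unset Strict Implicit. Unset Printing Implicit Defensive.

Section Trees.
Variable V : finType.

Definition simple_graph (A : {set V}) (e : rel V) : Prop :=
  [/\ forall x y, e x y = e y x,
      forall x, ~~ e x x &
      forall x y, e x y -> (x \in A) && (y \in A)].

Definition connected_in (B : {set V}) (e : rel V) (x y : V) : Prop :=
  exists p : seq V, [/\ x \in B, all (fun z => z \in B) p, path e x p & last x p = y].

Definition has_cycle (A : {set V}) (e : rel V) : Prop :=
  exists c : seq V, [/\ 3 <= size c, all (fun z => z \in A) c, uniq c & cycle e c].

Definition is_tree (A : {set V}) (e : rel V) : Prop :=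
  [/\ simple_graph A e, A != set0,
      (forall x y, x \in A -> y \in A -> connected_in A e x y) &
      ~ has_cycle A e].

Definition valence (e : rel V) (v : V) : nat := #|[set u | e v u]|.

Definition leaves (A : {set V}) (e : rel V) : {set V} :=
  [set v in A | valence e v == 1].

Definition internals (A : {set V}) (e : rel V) : {set V} :=
  [set v in A | valence e v != 1].

Definition stable_tree (A : {set V}) (e : rel V) : Prop :=
  is_tree A e /\ forall v, v \in internals A e -> 3 <= valence e v.

Definition marked_tree (A : {set V}) (e : rel V) (X : {set V}) : Prop :=
  is_tree A e /\ leaves A e = X.

Definition separates (A : {set V}) (e : rel V) (v v1 v2 v3 : V) : Prop :=
  [/\ v \in A, v1 \in A :\ v, v2 \in A :\ v, v3 \in A :\ v &
      [/\ ~ connected_in (A :\ v) e v1 v2,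
          ~ connected_in (A :\ v) e v1 v3 &
          ~ connected_in (A :\ v) e v2 v3]].

Definition compatible (AX : {set V}) (eX : rel V) (X : {set V})
                      (AY : {set V}) (eY : rel V) (Y : {set V}) : Prop :=
  [/\ X \subset Y, internals AX eX \subset internals AY eY &
      forall v v1 v2 v3, v \in AX -> v1 \in AX -> v2 \in AX -> v3 \in AX ->
        (separates AX eX v v1 v2 v3 <-> separates AY eY v v1 v2 v3)].

End Trees.

(* Main.v *)
Require Import Defs.
From mathcomp Require Import all_boot.
From Stdlib Require Import Classical.
Set Implicit Arguments. Unset Strict Implicit. Unset Printing Implicit Defensive.


Section Gen.
Variable V : finType.
Implicit Types (A B : {set V}) (e : rel V).

Lemma conn_refl B e x : x \in B -> connected_in B e x x.
Proof. by move=> hx; exists [::]. Qed.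

Lemma conn_cons B e x y z : e x y -> x \in B -> connected_in B e y z ->
  connected_in B e x z.
Proof.
move=> exy xB [p [yB allp pp lp]]; exists (y :: p); split=> //=.
  by rewrite yB allp.
by rewrite exy pp.
Qed.

Lemma conn_rcons B e x y z : connected_in B e x y -> e y z -> z \in B ->
  connected_in B e x z.
Proof.
move=> [p [xB allp pp lp]] eyz zB; exists (rcons p z); split=> //.
- by rewrite all_rcons zB allp.
- by rewrite rcons_path pp lp eyz.
- by rewrite last_rcons.
Qed.

Lemma conn_trans B e x y z : connected_in B e x y -> connected_in B e y z ->
  connected_in B e x z.
Proof.
move=> [p [xB allp pp lp]] [q [yB allq pq lq]]; exists (p ++ q); split=> //.
- by rewrite all_cat allp allq.
- by rewrite cat_path pp lp pq.
- by rewrite last_cat lp.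
Qed.

Lemma conn_sym B e x y : (forall a b, e a b = e b a) ->
  connected_in B e x y -> connected_in B e y x.
Proof.
move=> es [p [xB allp pp lp]]; elim: p x xB allp pp lp => [|z p IH] x xB /=.
  by move=> _ _ <-; apply: conn_refl.
case/andP=> zB allp /andP[exz pp] lp.
apply: conn_rcons (IH z zB allp pp lp) _ xB; by rewrite es.
Qed.

Lemma conn_mono B B' e x y : B \subset B' -> connected_in B e x y ->
  connected_in B' e x y.
Proof.
move=> sB [p [xB allp pp lp]]; exists p; split=> //.
  by apply: (subsetP sB).
by apply/allP=> z zp; apply: (subsetP sB); apply: (allP allp).
Qed.

Lemma conn_uniq B e x y : connected_in B e x y ->
  exists p, [/\ uniq (x :: p), all (fun z => z \in B) p, path e x p & last x p = y].
Proof.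
move=> [p [xB allp pp lp]]; case: (shortenP pp) lp => p' pp' up' sub lp.
exists p'; split=> //; apply/allP=> z zp; apply: (allP allp); exact: sub.
Qed.

Lemma conn_inB B e x y : connected_in B e x y -> (x \in B) /\ (y \in B).
Proof.
move=> [p [xB allp pp <-]]; split=> //.
by have := mem_last x p; rewrite inE => /predU1P[->//|]; apply: (allP allp).
Qed.

End Gen.


Section Tr.
Variable V : finType.
Variables (A : {set V}) (e : rel V).
Hypothesis tr : is_tree A e.

Let es : forall x y, e x y = e y x.
Proof. by case: tr => [[]]. Qed.
Let eirr : forall x, ~~ e x x.
Proof. by case: tr => [[]]. Qed.
Let eA : forall x y, e x y -> (x \in A) && (y \in A).
Proof. by case: tr => [[]]. Qed.

Lemma nbr_sep a b c : e a b -> e a c -> b != c -> ~ connected_in (A :\ a) e b c.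
Proof.
move=> eab eac nbc /conn_uniq [p [up allp pp lp]].
case: tr => _ _ _; apply; exists (a :: b :: p); split.
- case: p up allp pp lp => [|z p] //=; first by move=> _ _ _ lp; rewrite lp eqxx in nbc.
- case/andP: (eA eab) => aA bA /=; rewrite aA bA /=.
  by apply/allP=> z /(allP allp); rewrite inE => /andP[].
- rewrite cons_uniq up andbT inE negb_or; apply/andP; split.
    by apply/eqP => ab; move: eab (eirr a); rewrite -ab => ->.
  apply/negP=> /(allP allp); by rewrite !inE eqxx.
- by rewrite /= eab rcons_path pp lp es eac.
Qed.

Lemma path_cut x y z w : x \in A -> y \in A ->
  ~ connected_in (A :\ z) e x y -> w != z ->
  connected_in (A :\ w) e x z \/ connected_in (A :\ w) e z y.
Proof.
move=> xA yA nc wz.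
case: tr => _ _ cn _; case: (conn_uniq (cn x y xA yA)) => p [up allp pp lp].
have zin : z \in x :: p.
  apply/negPn/negP => zn; apply: nc; exists p; split=> //.
    by rewrite !inE xA andbT; apply: contraNneq zn => ->; rewrite mem_head.
  apply/allP=> u up'; rewrite !inE (allP allp _ up') andbT.
  by apply: contraNneq zn => <-; rewrite inE up' orbT.
move: zin; rewrite inE => /predU1P[zx|zp].
  by left; subst z; apply: conn_refl; rewrite !inE xA andbT eq_sym.
case/splitPr: zp up allp pp lp => p1 p2 up allp pp lp.
have zA : z \in A by apply: (allP allp); rewrite mem_cat mem_head orbT.
have [wl|wr] := boolP (w \in x :: p1).
  right; exists p2; split.
  - by rewrite !inE zA andbT eq_sym wz.
  - apply/allP=> u up2; rewrite !inE.
    rewrite (allP allp) ?andbT; last by rewrite mem_cat inE up2 !orbT.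
    apply/negP=> /eqP wu; subst u.
    move: up; rewrite -cat_cons cat_uniq => /and3P[_ /hasPn H _].
    by move: (H w); rewrite inE up2 orbT => /(_ isT); rewrite wl.
  - by move: pp; rewrite cat_path => /andP[_] /= /andP[].
  - by move: lp; rewrite last_cat.
left; exists (rcons p1 z); split.
- by rewrite !inE xA andbT; apply: contraNneq wr => ->; rewrite mem_head.
- rewrite all_rcons !inE zA eq_sym wz /=.
  apply/allP=> u up1; rewrite !inE (allP allp) ?andbT; last by rewrite mem_cat up1.
  by apply: contraNneq wr => <-; rewrite inE up1 orbT.
- by move: pp; rewrite cat_path rcons_path => /andP[-> /=] /andP[->].
- by rewrite last_rcons.
Qed.

End Tr.


Section Med.
Variable V : finType.

Lemma first_hit (B : {set V}) (e : rel V) (P : pred V) x s :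
  x \in B -> all (fun z => z \in B) s -> path e x s -> P (last x s) ->
  P x \/ exists n w, [/\ e n w, P w, ~~ P n &
                        connected_in [set z in B | ~~ P z] e x n].
Proof.
elim: s x => [|y s IH] x xB /=; first by move=> _ _ ->; left.
case/andP=> yB alls /andP[exy ps] Pl.
have [Px|nPx] := boolP (P x); first by left.
right; case: (IH y yB alls ps Pl) => [Py|[n [w [enw Pw nPn cn]]]].
  by exists x, y; split=> //; apply: conn_refl; rewrite inE xB.
exists n, w; split=> //; apply: conn_cons exy _ cn; by rewrite inE xB.
Qed.

Definition R (A : {set V}) (e : rel V) w x n :=
  x = w \/ (e w n /\ connected_in (A :\ w) e x n).

Variables (A : {set V}) (e : rel V).
Hypothesis tr : is_tree A e.

Let es : forall x y, e x y = e y x.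
Proof. by case: tr => [[]]. Qed.
Let eA : forall x y, e x y -> (x \in A) && (y \in A).
Proof. by case: tr => [[]]. Qed.

Lemma tail_R w s : w \in A -> path e w s -> all (fun z => z \in A) s ->
  w \notin s -> R A e w (last w s) (head w s) /\ (last w s != w -> head w s \in s).
Proof.
case: s => [|n s] wA /=; first by move=> *; split; [left|rewrite eqxx].
case/andP=> ewn ps /andP[nA alls]; rewrite inE negb_or => /andP[wn wns].
split; last by rewrite mem_head.
right; split=> //; apply: conn_sym => //; exists s; split=> //.
  by rewrite !inE nA andbT eq_sym.
apply/allP=> u us; rewrite !inE (allP alls _ us) andbT.
by apply: contraNneq wns => <-.
Qed.

Lemma split_R x p w : x \in A -> uniq (x :: p) -> all (fun z => z \in A) p ->
  path e x p -> w \in x :: p ->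
  exists n1 n2, [/\ R A e w x n1, R A e w (last x p) n2,
    (x != w -> n1 \in x :: p), (last x p != w -> n2 \in x :: p) &
    (x != w -> last x p != w -> n1 != n2)].
Proof.
move=> xA up allp pp; rewrite inE => /predU1P[wx|wp].
  subst w; move: up; rewrite cons_uniq => /andP[xp _].
  case: (tail_R xA pp allp xp) => H1 H2.
  exists x, (head x p); split=> //; first by left.
    by rewrite eqxx.
    by move=> /H2; rewrite inE => ->; rewrite orbT.
  by rewrite eqxx.
case/splitPr: wp up allp pp => p1 p2 up allp pp.
move: (up); rewrite -cat_cons cat_uniq => /and3P[_ /hasPn dis up2].
have wA : w \in A by apply: (allP allp); rewrite mem_cat mem_head orbT.
move: pp; rewrite cat_path => /andP[pp1] /= /andP[ew pp2].
have wp2 : w \notin p2 by move: up2; rewrite cons_uniq => /andP[].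
have allp2 : all (fun z => z \in A) p2.
  by apply/allP=> u u2; apply: (allP allp); rewrite mem_cat inE u2 !orbT.
case: (tail_R wA pp2 allp2 wp2) => H1 H2.
have wx1 : w \notin x :: p1 by move: (dis w); rewrite mem_head => /(_ isT).
exists (last x p1), (head w p2); split.
- right; split; first by rewrite es.
  exists p1; split=> //.
    by rewrite !inE xA andbT; apply: contraNneq wx1 => ->; rewrite mem_head.
  apply/allP=> u u1; rewrite !inE (allP allp) ?andbT; last by rewrite mem_cat u1.
  by apply: contraNneq wx1 => <-; rewrite inE u1 orbT.
- by rewrite last_cat /=.
- by move=> _; have := mem_last x p1; rewrite -cat_cons mem_cat => ->.
- rewrite last_cat /= => /H2 h; by rewrite inE mem_cat inE h !orbT.
- rewrite last_cat /= => _ /H2 h; apply/negP=> /eqP E.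
  move: (dis (head w p2)); rewrite inE h orbT => /(_ isT).
  by rewrite -E mem_last.
Qed.

Lemma med x1 x2 x3 : x1 \in A -> x2 \in A -> x3 \in A ->
  exists w n1 n2 n3, [/\ w \in A, R A e w x1 n1, R A e w x2 n2, R A e w x3 n3 &
    [/\ x1 != w -> x2 != w -> n1 != n2, x1 != w -> x3 != w -> n1 != n3 &
        x2 != w -> x3 != w -> n2 != n3]].
Proof.
move=> x1A x2A x3A; case: (tr) => _ _ cn _.
case: (conn_uniq (cn _ _ x1A x2A)) => p [up allp pp lp].
case: (cn _ _ x3A x1A) => q [_ allq pq lq].
have Pl : (fun z => z \in x1 :: p) (last x3 q) by rewrite lq mem_head.
have allA : forall u, u \in x1 :: p -> u \in A.
  by move=> u; rewrite inE => /predU1P[->//|/(allP allp)].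
case: (first_hit x3A allq pq Pl) => [x3p|[n3 [w [enw wp nn3 cn3]]]].
  case: (split_R x1A up allp pp x3p) => n1 [n2 [H1 H2 H3 H4 H5]].
  rewrite lp in H2 H4 H5.
  exists x3, n1, n2, x3; split=> //; try by left.
  by split=> // _; rewrite eqxx.
case: (split_R x1A up allp pp wp) => n1 [n2 [H1 H2 H3 H4 H5]].
rewrite lp in H2 H4 H5.
exists w, n1, n2, n3; split=> //; first exact: allA.
- right; split; first by rewrite es.
  apply: conn_mono cn3; apply/subsetP=> u; rewrite !inE => /andP[uA un].
  rewrite uA andbT; by apply: contraNneq un => ->.
- split=> //.
    by move=> /H3 h _; apply: contraNneq nn3 => <-.
  by move=> /H4 h _; apply: contraNneq nn3 => <-.
Qed.

End Med.


Section Main.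
Variable V : finType.

Lemma es_of (A : {set V}) e : is_tree A e -> forall x y, e x y = e y x.
Proof. by case=> [[]]. Qed.
Lemma eA_of (A : {set V}) e : is_tree A e -> forall x y, e x y -> (x \in A) && (y \in A).
Proof. by case=> [[]]. Qed.
Lemma eirr_of (A : {set V}) e : is_tree A e -> forall x, ~~ e x x.
Proof. by case=> [[]]. Qed.

Lemma nc_sym (B : {set V}) e x y : (forall a b, e a b = e b a) ->
  ~ connected_in B e x y -> ~ connected_in B e y x.
Proof. by move=> es H /(conn_sym es). Qed.

Lemma sep_nb (A : {set V}) e w na nb xa xb : is_tree A e ->
  e w na -> e w nb -> na != nb ->
  connected_in (A :\ w) e xa na -> connected_in (A :\ w) e xb nb ->
  ~ connected_in (A :\ w) e xa xb.
Proof.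
move=> tr ea eb nab ca cb cab; apply: (nbr_sep tr ea eb nab).
apply: conn_trans (conn_sym (es_of tr) ca) _; exact: conn_trans cab cb.
Qed.

Lemma third (A : {set V}) e w a b : stable_tree A e -> e w a -> e w b -> a != b ->
  exists u, [/\ e w u, u != a & u != b].
Proof.
move=> [tr st] ea eb ab.
have [/existsP[u /andP[/andP[h1 h2] h3]]|/existsPn H] :=
  boolP [exists u, e w u && (u != a) && (u != b)]; first by exists u.
have wA : w \in A by case/andP: (eA_of tr ea).
have sub1 : [set a; b] \subset [set u | e w u].
  by apply/subsetP=> u; rewrite !inE => /orP[]/eqP->.
have v2 : 2 <= valence e w.
  by move: (subset_leq_card sub1); rewrite cards2 ab.

have : w \in internals A e by rewrite inE wA; apply: contraTneq v2 => ->.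
move=> /st v3.
have sub2 : [set u | e w u] \subset [set a; b].
  apply/subsetP=> u; rewrite !inE => eu; move: (H u); rewrite eu /=.
  by rewrite negb_and !negbK => /orP[->|->]; rewrite ?orbT.
move: (subset_leq_card sub2); rewrite cards2 -/(valence e w).
by case: (a == b) => /= h; move: (leq_trans v3 h).
Qed.

Lemma yuniq (A : {set V}) e v w x1 x2 x3 : is_tree A e ->
  separates A e v x1 x2 x3 -> separates A e w x1 x2 x3 -> w = v.
Proof.
move=> tr [vA x1A x2A x3A [n12 n13 n23]] [wA y1 y2 y3 [m12 m13 m23]].
have es := es_of tr.
case: (eqVneq w v) => // wv.
have key : forall x, x \in A :\ w -> ~ connected_in (A :\ v) e w x ->
    connected_in (A :\ w) e v x.
  move=> x; rewrite inE => /andP[_ xA] nc.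
  case: (path_cut tr wA xA nc wv) => // /conn_inB [].
  by rewrite !inE eqxx.
have w1 : w \in A :\ v by rewrite !inE wv wA.
have cv : forall x y, connected_in (A :\ v) e w x -> connected_in (A :\ v) e w y ->
   connected_in (A :\ v) e x y.
  by move=> x y a b; apply: conn_trans (conn_sym es a) b.
have cw : forall x y, x \in A :\ w -> y \in A :\ w ->
   ~ connected_in (A :\ v) e w x -> ~ connected_in (A :\ v) e w y ->
   connected_in (A :\ w) e x y.
  by move=> x y xw yw a b; apply: conn_trans (conn_sym es (key _ xw a)) (key _ yw b).
case: (classic (connected_in (A :\ v) e w x1)) => c1;
case: (classic (connected_in (A :\ v) e w x2)) => c2;
case: (classic (connected_in (A :\ v) e w x3)) => c3.
all: exfalso; first [ exact: (n12 (cv _ _ c1 c2)) | exact: (n13 (cv _ _ c1 c3))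
           | exact: (n23 (cv _ _ c2 c3)) | exact: (m12 (cw _ _ y1 y2 c1 c2))
           | exact: (m13 (cw _ _ y1 y3 c1 c3)) | exact: (m23 (cw _ _ y2 y3 c2 c3)) ].
Qed.

Lemma ycut (A : {set V}) e v z xa xc : is_tree A e ->
  xa \in A -> xc \in A -> v != z ->
  ~ connected_in (A :\ z) e xa xc ->
  ~ connected_in (A :\ v) e xa z -> ~ connected_in (A :\ v) e z xc -> False.
Proof.
by move=> tr aA cA vz nc h1 h2; case: (path_cut tr aA cA nc vz).
Qed.

End Main.


Lemma endc (V : finType) (AX AY X Y : {set V}) (eX eY : rel V) w xb xc nb nc :
  stable_tree AX eX -> compatible AX eX X AY eY Y -> w \in AX ->
  eX w nb -> connected_in (AX :\ w) eX xb nb ->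
  eX w nc -> connected_in (AX :\ w) eX xc nc -> nb != nc ->
  ~ connected_in (AY :\ w) eY xb xc.
Proof.
move=> stX [_ _ comp] wA eb cb ec cc nbc.
have trX := stX.1.
case: (third stX eb ec nbc) => u [eu ub uc].
have uw : u \in AX :\ w.
  rewrite !inE (andP (eA_of trX eu)).2 andbT.
  by apply/eqP=> E; move: (eirr_of trX w); rewrite -{2}E eu.
have cu : connected_in (AX :\ w) eX u u by apply: conn_refl.
have xbw := (conn_inB cb).1; have xcw := (conn_inB cc).1.
have sX : separates AX eX w xb xc u.
  split=> //; split.
  - exact: (sep_nb trX eb ec nbc cb cc).
  - by apply: (sep_nb trX eb eu _ cb cu); rewrite eq_sym.
  - by apply: (sep_nb trX ec eu _ cc cu); rewrite eq_sym.
have := (comp w xb xc u wA); rewrite !inE in xbw xcw uw.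
case/andP: xbw => _ -> /(_ isT); case/andP: xcw => _ -> /(_ isT).
case/andP: uw => _ -> /(_ isT) [H _].
by case: (H sX) => _ _ _ _ [].
Qed.

Theorem lemma3p4 (V : finType) (AX AY X Y : {set V}) (eX eY : rel V) :
  stable_tree AX eX -> marked_tree AX eX X ->
  stable_tree AY eY -> marked_tree AY eY Y ->
  compatible AX eX X AY eY Y ->
  forall v v1 v2 v3 : V,
    v \in internals AY eY ->
    v1 \in AX -> v2 \in AX -> v3 \in AX ->
    separates AY eY v v1 v2 v3 ->
    v \in AX.
Proof.
move=> stX _ stY _ cp v v1 v2 v3 _ v1X v2X v3X sepY.
have trX := stX.1; have trY := stY.1; have esY := es_of trY.
move: (sepY) => [vA y1 y2 y3 [n12 n13 n23]].
have d : forall a b, a \in AY :\ v -> ~ connected_in (AY :\ v) eY a b -> a != b.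
  by move=> a b aA nc; apply/eqP=> E; subst b; apply: nc; apply: conn_refl.
have d12 := d _ _ y1 n12; have d13 := d _ _ y1 n13; have d23 := d _ _ y2 n23.
have vne : forall a, a \in AY :\ v -> v != a.
  by move=> a; rewrite !inE => /andP[h _]; rewrite eq_sym.
have inY : forall a, a \in AY :\ v -> a \in AY by move=> a; rewrite inE => /andP[].
case: (med trX v1X v2X v3X) => w [m1 [m2 [m3 [wA R1 R2 R3 [e12 e13 e23]]]]].
rewrite /R in R1 R2 R3.
case: R1 => [E1|[ew1 c1]].
  subst w; case: R2 => [E|[ew2 c2]]; first by rewrite E eqxx in d12.
  case: R3 => [E|[ew3 c3]]; first by rewrite E eqxx in d13.
  have H := endc stX cp wA ew2 c2 ew3 c3 (e23 _ _).
  exfalso; apply: (ycut trY (inY _ y2) (inY _ y3) (vne _ y1) (H _ _)).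
  all: try (by []); try (by rewrite eq_sym).
  exact: nc_sym esY n12.
case: R2 => [E2|[ew2 c2]].
  subst w; case: R3 => [E|[ew3 c3]]; first by rewrite E eqxx in d23.
  have H := endc stX cp wA ew1 c1 ew3 c3 (e13 _ _).
  exfalso; apply: (ycut trY (inY _ y1) (inY _ y3) (vne _ y2) (H _ _)).
  all: try (by []); try (by rewrite eq_sym).
case: R3 => [E3|[ew3 c3]].
  subst w.
  have H := endc stX cp wA ew1 c1 ew2 c2 (e12 _ _).
  exfalso; apply: (ycut trY (inY _ y1) (inY _ y2) (vne _ y3) (H _ _)).
  all: try (by []); try (by rewrite eq_sym).
  exact: nc_sym esY n23.
have w1 := (conn_inB c1).1; have w2 := (conn_inB c2).1; have w3 := (conn_inB c3).1.
have n1 : v1 != w by move: w1; rewrite !inE => /andP[].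
have n2 : v2 != w by move: w2; rewrite !inE => /andP[].
have n3 : v3 != w by move: w3; rewrite !inE => /andP[].
have sX : separates AX eX w v1 v2 v3.
  split=> //; split.
  - exact: (sep_nb trX ew1 ew2 (e12 n1 n2) c1 c2).
  - exact: (sep_nb trX ew1 ew3 (e13 n1 n3) c1 c3).
  - exact: (sep_nb trX ew2 ew3 (e23 n2 n3) c2 c3).
case: cp => _ _ comp.
have := (comp w v1 v2 v3 wA v1X v2X v3X) => -[H _].
by rewrite -(yuniq trY sepY (H sX)).
Qed.
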